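(* Let $G$ be a threshold graph on $n$ vertices with binary string $b=0^{s_1}1^{t_1}\cdots0^{s_k}1^{t_k}$ (all $s_i,t_i\geq1$). Let $s=\min_i s_i$, $t=\min_i t_i$, $\sigma=\max_i s_i$, $\tau=\max_i t_i$. Let $G'$ be the threshold graph with binary string $b'=(0^s1^t)^k$ (the block $0^s1^t$ repeated $k$ times) and $G''$ the threshold graph with binary string $b''=(0^\sigma1^\tau)^k$, with $n'=k(s+t)$ and $n''=k(\sigma+\tau)$ vertices respectively. Then \[ \lambda_i(G'')\leq\lambda_i(G)\leq\lambda_i(G'),\quad i=1,\ldots,k, \] and \[ \lambda_{n'-j}(G')\leq\lambda_{n-j}(G)\leq\lambda_{n''-j}(G''),\quad j=0,\ldots,k-1. \]
   Context: Eigenvalues of a graph $H$ on $m$ vertices are those of its $(0,1)$-adjacency matrix, ordered $\lambda_1(H)\leq\cdots\leq\lambda_m(H)$. Threshold graphs from binary strings: given $b=b_1\cdots b_n\in\{0,1\}^n$ with $b_1=0$, start with a single vertex and for $j=2,\ldots,n$ add a new vertex adjacent to all previous vertices if $b_j=1$ and isolated if $b_j=0$; the result is $G(b)$, and $b$ is its binary string. $0^s$ (resp. $1^t$) denotes $s$ consecutive zeros (resp. $t$ consecutive ones). *)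

(* Defs.v *)
From HB Require Import structures.
From mathcomp Require Import all_boot all_order all_algebra all_field.
Set Implicit Arguments. Unset Strict Implicit. Unset Printing Implicit Defensive.
Import Order.TTheory GRing.Theory Num.Theory.
Local Open Scope ring_scope.

(* Threshold graph G(b) on vertices 0..size b - 1 (0-based): vertex j is
   adjacent to all earlier vertices iff b_j = 1, so for i <> j the pair
   {i,j} is an edge iff b_(max i j) = 1. Adjacency matrix over algC. *)
Definition thr_adj (b : seq bool) : 'M[algC]_(size b) :=
  \matrix_(i, j) (if i == j then 0 else (nth false b (maxn i j))%:R).

(* Eigenvalues = roots of the characteristic polynomial, with multiplicity,
   sorted increasingly (they are all real, the matrix being real symmetric). *)
Definition thr_spec (b : seq bool) : seq algC :=
  sort (fun x y : algC => x <= y)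
    (projT1 (closed_field_poly_normal (char_poly (thr_adj b)))).

(* lambda_i(G(b)), 1-based index i = 1..size b. *)
Definition thr_lambda (b : seq bool) (i : nat) : algC :=
  nth 0 (thr_spec b) i.-1.

Definition block_string (k : nat) (s t : nat -> nat) : seq bool :=
  flatten [seq nseq (s i) false ++ nseq (t i) true | i <- iota 0 k].

(* Main.v *)
Require Import Defs.
From HB Require Import structures.
From mathcomp Require Import all_boot all_order all_algebra all_field.
From mathcomp Require Import zify.
Set Implicit Arguments. Unset Strict Implicit. Unset Printing Implicit Defensive.
Import Order.TTheory GRing.Theory Num.Theory.
Local Open Scope ring_scope.
Local Open Scope sesquilinear_scope.
Section LA.
Variable C : numClosedFieldType.

Definition leC := fun x y : C => x <= y.

Lemma sorted_sortC (s : seq C) : all (fun x => x \is Num.real) s -> sorted leC (sort leC s).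
Proof.
move=> hs; apply: (@sort_sorted_in _ (fun x => x \is Num.real)) => //.
by move=> x y hx hy; apply: real_leVge.
Qed.

Lemma leC_trans : transitive leC. Proof. by move=> x y z; apply: le_trans. Qed.
Lemma leC_refl : reflexive leC. Proof. by move=> x; apply: lexx. Qed.

Lemma cnt_split (a : pred C) (u : seq C) j : count a u = (count a (take j u) + count a (drop j u))%N.
Proof. by rewrite -count_cat cat_take_drop. Qed.

Lemma count_ge (s : seq C) r : all (fun x => x \is Num.real) s -> (r < size s)%N ->
  (size s - r <= count (fun x => (nth 0 (sort leC s) r <= x)%R) s)%N.
Proof.
move=> hs hr; set t := sort leC s.
have st : sorted leC t by apply: sorted_sortC.
have szt : size t = size s by rewrite size_sort.
have -> : count (fun x => nth 0 t r <= x) s = count (fun x => nth 0 t r <= x) t by apply/permP; rewrite perm_sym; apply: permEl; apply: perm_sort.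
rewrite (cnt_split _ t r).
have : all (fun x => nth 0 t r <= x) (drop r t).
  apply/(all_nthP 0) => i hi; rewrite nth_drop.
  rewrite size_drop szt in hi.
  apply: (sorted_leq_nth leC_trans leC_refl) => //; rewrite ?inE /=; rewrite ?szt; lia.
rewrite all_count => /eqP ->; rewrite size_drop szt; lia.
Qed.

Lemma count_le (s : seq C) r : all (fun x => x \is Num.real) s -> (r < size s)%N ->
  (r.+1 <= count (fun x => (x <= nth 0 (sort leC s) r)%R) s)%N.
Proof.
move=> hs hr; set t := sort leC s.
have st : sorted leC t by apply: sorted_sortC.
have szt : size t = size s by rewrite size_sort.
have -> : count (fun x => x <= nth 0 t r) s = count (fun x => x <= nth 0 t r) t by apply/permP; rewrite perm_sym; apply: permEl; apply: perm_sort.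
rewrite (cnt_split _ t r.+1).
have hsz : size (take r.+1 t) = r.+1 by rewrite size_takel // szt.
have : all (fun x => x <= nth 0 t r) (take r.+1 t).
  apply/(all_nthP 0) => i hi; rewrite hsz in hi; rewrite nth_take //.
  apply: (sorted_leq_nth leC_trans leC_refl) => //; rewrite ?inE /=; rewrite ?szt; lia.
rewrite all_count => /eqP ->; rewrite hsz; lia.
Qed.
Lemma char_poly_conj n (P M : 'M[C]_n) : P \in unitmx ->
  char_poly (invmx P *m M *m P) = char_poly M.
Proof.
move=> Pu; rewrite /char_poly /char_poly_mx.
have -> : 'X%:M - map_mx polyC (invmx P *m M *m P) =
   map_mx polyC (invmx P) *m ('X%:M - map_mx polyC M) *m map_mx polyC P.
  rewrite mulmxBr mulmxBl !map_mxM; congr (_ - _).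
  by rewrite mul_mx_scalar -scalemxAl -map_mxM mulVmx // map_mx1 scalemx1.
rewrite !det_mulmx mulrC mulrA -det_mulmx -map_mxM mulmxV // map_mx1 det1.
by rewrite mul1r.
Qed.

Lemma adjM m n p (X : 'M[C]_(m, n)) (Y : 'M[C]_(n, p)) :
  (X *m Y)^t* = Y^t* *m X^t*.
Proof. by rewrite trmx_mul map_mxM. Qed.

Lemma spec_perm n (A P : 'M[C]_n) (D : 'rV_n) : P \in unitmx ->
  A = invmx P *m diag_mx D *m P ->
  perm_eq (projT1 (closed_field_poly_normal (char_poly A))) [seq D 0 i | i <- enum 'I_n].
Proof.
move=> Pu hA; case: closed_field_poly_normal => r /= hr.
rewrite (monicP (char_poly_monic A)) scale1r in hr.
apply: prod_XsubC_eq; rewrite big_map -hr.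
rewrite hA char_poly_conj //.
rewrite char_poly_trig ?diag_mx_is_trig //.
rewrite big_enum /=; apply: eq_bigr => i _; by rewrite mxE eqxx mulr1n.
Qed.
Lemma unitary_rank p n (X : 'M[C]_(p, n)) : X \is unitarymx -> \rank X = p.
Proof.
move=> /unitarymxP hX; apply/eqP; rewrite eqn_leq rank_leq_row /=.
by rewrite -{1}(mxrank1 C p) -hX mxrankM_maxl.
Qed.

Lemma unitary_row_free p n (X : 'M[C]_(p, n)) : X \is unitarymx -> row_free X.
Proof. by move=> hX; rewrite /row_free unitary_rank. Qed.

Lemma sel_unitary p n (h : 'I_p -> 'I_n) : injective h ->
  rowsub h (1%:M : 'M[C]_n) \is unitarymx.
Proof.
move=> hi; apply/unitarymxP; apply/matrixP => i j; rewrite !mxE.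
rewrite (bigD1 (h i)) //= big1 => [|k hk]; rewrite !mxE.
  rewrite eqxx mul1r addr0 (inj_eq hi) eq_sym.
  by rewrite conjC_nat.
by rewrite eq_sym (negbTE hk) mul0r.
Qed.

Lemma sel_zero p n (h : 'I_p -> 'I_n) (x : 'rV[C]_p) j :
  (forall r, h r != j) -> (x *m rowsub h 1%:M) 0 j = 0.
Proof.
move=> hj; rewrite !mxE big1 // => r _; rewrite !mxE (negbTE (hj r)) mulr0 //.
Qed.

Lemma quad n (X M : 'M[C]_n) (d : 'rV_n) (z : 'rV_n) : X \is unitarymx ->
  M = X^t* *m diag_mx d *m X ->
  (z *m X) *m M *m (z *m X)^t* = z *m diag_mx d *m z^t*.
Proof.
move=> /unitarymxP hX ->; rewrite adjM !mulmxA.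
have e : X *m X^t* = 1%:M by exact: hX.
rewrite -(mulmxA z X). rewrite e mulmx1. rewrite -[_ *m X *m X^t*]mulmxA. rewrite e mulmx1 //.
Qed.

Lemma nrm_unit p n (X : 'M[C]_(p, n)) (z : 'rV_p) : X \is unitarymx ->
  (z *m X) *m (z *m X)^t* = z *m z^t*.
Proof. by move=> /unitarymxP hX; rewrite adjM mulmxA -(mulmxA z) hX mulmx1. Qed.

Lemma quad_sum n (z d : 'rV[C]_n) :
  (z *m diag_mx d *m z^t*) 0 0 = \sum_j z 0 j * (z 0 j)^* * d 0 j.
Proof.
rewrite mul_mx_diag !mxE; apply: eq_bigr => j _; rewrite !mxE.
by rewrite -mulrA (mulrC (d 0 j)) mulrA.
Qed.

Lemma nrm_sum n (z : 'rV[C]_n) :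
  (z *m z^t*) 0 0 = \sum_j z 0 j * (z 0 j)^*.
Proof. by rewrite !mxE; apply: eq_bigr => j _; rewrite !mxE. Qed.


Lemma core n m (A P : 'M[C]_n) (D : 'rV[C]_n) (Q : 'M[C]_m) (E : 'rV[C]_m)
  (J : 'M[C]_(m, n)) (T : {set 'I_m}) (S : {set 'I_n}) (c1 c2 : C) :
  P \is unitarymx -> A = P^t* *m diag_mx D *m P ->
  Q \is unitarymx -> J *m A *m J^t* = Q^t* *m diag_mx E *m Q ->
  J \is unitarymx ->
  (n < #|T| + #|S|)%N ->
  (forall i, i \in T -> E 0 i <= c1) -> (forall i, i \in S -> c2 <= D 0 i) ->
  c2 <= c1.
Proof.
move=> PU hA QU hB JU hcard hT hS.
pose fT : 'I_#|T| -> 'I_m := enum_val.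
pose fS : 'I_#|S| -> 'I_n := enum_val.
have fTi : injective fT by apply: enum_val_inj.
have fSi : injective fS by apply: enum_val_inj.
pose W := rowsub fT (1%:M : 'M[C]_m) *m Q *m J.
pose U := rowsub fS (1%:M : 'M[C]_n) *m P.
have rW : \rank W = #|T|.
  rewrite /W !mxrankMfree ?unitary_row_free //; exact: unitary_rank (sel_unitary fTi).
have rU : \rank U = #|S|.
  rewrite /U !mxrankMfree ?unitary_row_free //; exact: unitary_rank (sel_unitary fSi).
have rcap : (0 < \rank (W :&: U)%MS)%N.
  have := mxrank_sum_cap W U; have := rank_leq_col (W + U)%MS; lia.
have [i hi] : exists i, row i (W :&: U)%MS != 0.
  case: (pickP (fun i => row i (W :&: U)%MS != 0)) => [i hi|h]; first by exists i.
  move: rcap; rewrite lt0n mxrank_eq0 => /eqP []; apply/row_matrixP => i.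
  by rewrite row0; apply/eqP; move: (h i) => /negbFE.
set u := row i _ in hi.
have uW : (u <= W)%MS by apply: submx_trans (row_sub _ _) (capmxSl _ _).
have uU : (u <= U)%MS by apply: submx_trans (row_sub _ _) (capmxSr _ _).
case/submxP: uW => x hx; case/submxP: uU => y hy.
pose z := x *m rowsub fT (1%:M : 'M[C]_m).
pose w := y *m rowsub fS (1%:M : 'M[C]_n).
have uz : u = (z *m Q) *m J by rewrite hx /W /z !mulmxA.
have uw : u = w *m P by rewrite hy /U /w !mulmxA.
have zT : forall j, j \notin T -> z 0 j = 0.
  move=> j hj; apply: sel_zero => r; apply: contraNneq hj => <-; exact: enum_valP.
have wS : forall j, j \notin S -> w 0 j = 0.
  move=> j hj; apply: sel_zero => r; apply: contraNneq hj => <-; exact: enum_valP.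
have q1 : u *m A *m u^t* = z *m diag_mx E *m z^t*.
  by rewrite -(quad z QU hB) uz !adjM !mulmxA.
have q2 : u *m A *m u^t* = w *m diag_mx D *m w^t* by rewrite uw; apply: quad.
have n1 : u *m u^t* = z *m z^t* by rewrite uz nrm_unit // nrm_unit.
have n2 : u *m u^t* = w *m w^t* by rewrite uw nrm_unit.
have z0 : z != 0.
  apply: contraNneq hi => z0; by rewrite uz z0 !mul0mx.
have Npos : 0 < (z *m z^t*) 0 0.
  have [j hj] : exists j, z 0 j != 0.
    case: (pickP (fun j => z 0 j != 0)) => [j hj|h]; first by exists j.
    move: z0 => /eqP []; apply/rowP => j; rewrite [RHS]mxE.
    by apply/eqP; move: (h j) => /negbFE.
  rewrite nrm_sum (bigD1 j) //=; apply: ltr_wpDr.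
    by apply: sumr_ge0 => k _; apply: mul_conjC_ge0.
  by rewrite mul_conjC_gt0.
have hq : (w *m diag_mx D *m w^t*) 0 0 = (z *m diag_mx E *m z^t*) 0 0 by rewrite -q1 -q2.
have hN : (w *m w^t*) 0 0 = (z *m z^t*) 0 0 by rewrite -n1 -n2.
have le1 : (z *m diag_mx E *m z^t*) 0 0 <= c1 * (z *m z^t*) 0 0.
  rewrite quad_sum nrm_sum mulr_sumr; apply: ler_sum => j _.
  case: (boolP (j \in T)) => hj.
    rewrite [c1 * _]mulrC; apply: ler_wpM2l; [exact: mul_conjC_ge0 | exact: hT].
  by rewrite zT // !mul0r mulr0.
have le2 : c2 * (w *m w^t*) 0 0 <= (w *m diag_mx D *m w^t*) 0 0.
  rewrite quad_sum nrm_sum mulr_sumr; apply: ler_sum => j _.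
  case: (boolP (j \in S)) => hj.
    rewrite [c2 * _]mulrC; apply: ler_wpM2l; [exact: mul_conjC_ge0 | exact: hS].
  by rewrite wS // !mul0r mulr0.
rewrite -(ler_pM2r Npos); apply: le_trans le1; by rewrite -hq -hN.
Qed.


Lemma card_count n (q : pred 'I_n) : #|[set i | q i]| = count q (enum 'I_n).
Proof.
rewrite cardsE cardE -deprecated_filter_index_enum size_filter.
by rewrite enumT [index_enum _]unlock.
Qed.

Definition spec n (A : 'M[C]_n) :=
  sort leC (projT1 (closed_field_poly_normal (char_poly A))).

Lemma herm_adj n (A : 'M[C]_n) : A \is hermsymmx -> A^t* = A.
Proof. by move/is_hermitianmxP; rewrite expr0 scale1r => <-. Qed.

Lemma adj_herm n (A : 'M[C]_n) : A^t* = A -> A \is hermsymmx.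
Proof. by move=> h; apply/is_hermitianmxP; rewrite expr0 scale1r h. Qed.

Lemma spec_data n (A : 'M[C]_n) : A \is hermsymmx ->
  exists P : 'M[C]_n, exists D : 'rV[C]_n,
    [/\ P \is unitarymx, A = P^t* *m diag_mx D *m P,
        (forall i, D 0 i \is Num.real) &
        perm_eq (projT1 (closed_field_poly_normal (char_poly A))) [seq D 0 i | i <- enum 'I_n]].
Proof.
move=> Ah; exists (spectralmx A), (spectral_diag A).
have PU := spectral_unitarymx A.
have hA : A = invmx (spectralmx A) *m diag_mx (spectral_diag A) *m spectralmx A.
  by apply/orthomx_spectralP; apply: hermitian_normalmx.
split => //.
- by rewrite {1}hA invmx_unitary.
- by move=> i; have /mxOverP := hermitian_spectral_diag_real Ah; apply.
- by apply: spec_perm hA; apply: unitarymx_unit.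
Qed.

Lemma spec_facts n (A : 'M[C]_n) (D : 'rV[C]_n) :
  perm_eq (projT1 (closed_field_poly_normal (char_poly A))) [seq D 0 i | i <- enum 'I_n] ->
  (forall i, D 0 i \is Num.real) ->
  let s := projT1 (closed_field_poly_normal (char_poly A)) in
  [/\ all (fun x => x \is Num.real) s, size s = n &
      forall p : pred C, count p s = #|[set i | p (D 0 i)]| ].
Proof.
move=> hp hD s; split.
- apply/allP => x; rewrite (perm_mem hp) => /mapP [i _ ->]; exact: hD.
- by rewrite (perm_size hp) size_map size_enum_ord.
- by move=> p; rewrite card_count (permP hp) count_map.
Qed.

Lemma interlace n m (A : 'M[C]_n) (J : 'M[C]_(m, n)) :
  A \is hermsymmx -> J \is unitarymx ->
  (forall r, (r < m)%N -> nth 0 (spec A) r <= nth 0 (spec (J *m A *m J^t*)) r) /\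
  (forall j, (j < m)%N ->
     nth 0 (spec (J *m A *m J^t*)) (m - 1 - j) <= nth 0 (spec A) (n - 1 - j)).
Proof.
move=> Ah JU; set B := J *m A *m J^t*.
have Bh : B \is hermsymmx.
  apply: adj_herm; rewrite /B !adjM trmxCK herm_adj //; by rewrite mulmxA.
have mn : (m <= n)%N by rewrite -(unitary_rank JU) rank_leq_col.
have [P [D [PU hA hD pA]]] := spec_data Ah.
have [Q [E [QU hB hE pB]]] := spec_data Bh.
have [rA sA cA] := spec_facts pA hD.
have [rB sB cB] := spec_facts pB hE.
split.
- move=> r hr.
  apply: (@core n m A P D Q E J [set i | E 0 i <= nth 0 (spec B) r]
            [set i | nth 0 (spec A) r <= D 0 i]) => //.
  + have h1 := @count_le _ r rB; rewrite sB in h1.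
    have h2 := @count_ge _ r rA; rewrite sA in h2.
    have e1 : #|[set i | E 0 i <= nth 0 (spec B) r]| =
       count (fun x => x <= nth 0 (sort leC (projT1 (closed_field_poly_normal (char_poly B)))) r)
          (projT1 (closed_field_poly_normal (char_poly B))) by rewrite cB.
    have e2 : #|[set i | nth 0 (spec A) r <= D 0 i]| =
       count (fun x => nth 0 (sort leC (projT1 (closed_field_poly_normal (char_poly A)))) r <= x)
          (projT1 (closed_field_poly_normal (char_poly A))) by rewrite cA.
    rewrite e1 e2; have := h1 hr; have := h2 (leq_trans hr mn); lia.
  + by move=> i; rewrite inE.
  + by move=> i; rewrite inE.
- move=> j hj.
  have hA' : - A = P^t* *m diag_mx (- D) *m P by rewrite hA raddfN /= mulmxN mulNmx.
  have hB' : J *m - A *m J^t* = Q^t* *m diag_mx (- E) *m Q.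
    by rewrite mulmxN mulNmx -/B hB raddfN /= mulmxN mulNmx.
  rewrite -lerN2.
  apply: (@core n m (- A) P (- D) Q (- E) J [set i | nth 0 (spec B) (m - 1 - j) <= E 0 i]
            [set i | D 0 i <= nth 0 (spec A) (n - 1 - j)]) => //.
  + have h1 := @count_ge _ (m - 1 - j) rB; rewrite sB in h1.
    have h2 := @count_le _ (n - 1 - j) rA; rewrite sA in h2.
    have e1 : #|[set i | nth 0 (spec B) (m - 1 - j) <= E 0 i]| =
       count (fun x => nth 0 (sort leC (projT1 (closed_field_poly_normal (char_poly B)))) (m - 1 - j) <= x)
          (projT1 (closed_field_poly_normal (char_poly B))) by rewrite cB.
    have e2 : #|[set i | D 0 i <= nth 0 (spec A) (n - 1 - j)]| =
       count (fun x => x <= nth 0 (sort leC (projT1 (closed_field_poly_normal (char_poly A)))) (n - 1 - j))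
          (projT1 (closed_field_poly_normal (char_poly A))) by rewrite cA.
    have hj1 : (m - 1 - j < m)%N by lia.
    have hj2 : (n - 1 - j < n)%N by lia.
    rewrite e1 e2; have := h1 hj1; have := h2 hj2; lia.
  + by move=> i; rewrite inE !mxE lerN2.
  + by move=> i; rewrite inE !mxE lerN2.
Qed.
End LA.

Lemma subseq_idx (s1 s2 : seq bool) : subseq s1 s2 ->
  exists f : nat -> nat,
    (forall i j, (i < j)%N -> (j < size s1)%N -> (f i < f j)%N) /\
    (forall i, (i < size s1)%N -> (f i < size s2)%N /\ nth false s2 (f i) = nth false s1 i).
Proof.
elim: s2 s1 => [|y s2 IH] s1.
  by rewrite subseq0 => /eqP ->; exists id; split.
case: s1 => [|x s1]; first by move=> _; exists id; split.
rewrite /=; case: eqP => [<-|_] hs.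
  have [f [fm fn]] := IH _ hs.
  exists (fun i => if i is i'.+1 then (f i').+1 else 0%N); split.
    by move=> [|i] [|j] //= hij hj; rewrite ltnS fm.
  by move=> [|i] //= hi; have [h1 h2] := fn i hi; rewrite ltnS.
have [f [fm fn]] := IH _ hs.
exists (fun i => (f i).+1); split.
  by move=> i j hij hj; rewrite ltnS fm.
by move=> i hi; have [h1 h2] := fn i hi; rewrite /= ltnS.
Qed.

Lemma thr_adj_herm (b : seq bool) : (thr_adj b)^t* = thr_adj b.
Proof.
apply/matrixP => i j; rewrite !mxE maxnC eq_sym.
by case: (i == j); rewrite ?conjC0 ?conjC_nat.
Qed.

Lemma size_block_gen (l : seq nat) a c :
  size (flatten [seq nseq a false ++ nseq c true | i <- l]) = (size l * (a + c))%N.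
Proof.
elim: l => [|x l IH] //=; rewrite size_cat IH !size_cat !size_nseq mulSn //.
Qed.

Lemma size_block_const k a c :
  size (block_string k (fun _ => a) (fun _ => c)) = (k * (a + c))%N.
Proof. by rewrite /block_string size_block_gen size_iota. Qed.

Lemma subseq_nseq a a' (x : bool) : (a <= a')%N -> subseq (nseq a x) (nseq a' x).
Proof. by move=> h; rewrite -(subnKC h) nseqD prefix_subseq. Qed.

Lemma subseq_block_gen (l : seq nat) s1 t1 s2 t2 :
  (forall i, i \in l -> (s1 i <= s2 i)%N /\ (t1 i <= t2 i)%N) ->
  subseq (flatten [seq nseq (s1 i) false ++ nseq (t1 i) true | i <- l])
         (flatten [seq nseq (s2 i) false ++ nseq (t2 i) true | i <- l]).
Proof.
elim: l => [|x l IH] h //=.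
have [h1 h2] := h x (mem_head _ _).
apply: cat_subseq; first apply: cat_subseq; try exact: subseq_nseq.
by apply: IH => i hi; apply: h; rewrite inE hi orbT.
Qed.

Lemma subseq_block k s1 t1 s2 t2 :
  (forall i, (i < k)%N -> (s1 i <= s2 i)%N /\ (t1 i <= t2 i)%N) ->
  subseq (block_string k s1 t1) (block_string k s2 t2).
Proof.
move=> h; apply: subseq_block_gen => i; rewrite mem_iota add0n => /andP [_]; exact: h.
Qed.

Lemma thr_embed (bs bb : seq bool) : subseq bs bb ->
  exists J : 'M[algC]_(size bs, size bb),
    J \is unitarymx /\ thr_adj bs = J *m thr_adj bb *m J^t*.
Proof.
move=> hsub; have [f [fm fn]] := subseq_idx hsub.
pose h (i : 'I_(size bs)) : 'I_(size bb) := Ordinal (proj1 (fn i (ltn_ord i))).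
have hi : injective h.
  move=> i j /(congr1 val) /= e; apply/val_inj => /=.
  case: (ltngtP i j) => // hij.
    by have := fm _ _ hij (ltn_ord j); rewrite e ltnn.
  by have := fm _ _ hij (ltn_ord i); rewrite e ltnn.
exists (rowsub h 1%:M); split; first exact: sel_unitary.
rewrite mul_rowsub_mx mul1mx; apply/matrixP => i j; rewrite !mxE.
rewrite (bigD1 (h j)) //= big1 => [|k hk]; last first.
  by rewrite !mxE (eq_sym (h j)) (negbTE hk) conjC0 mulr0.
rewrite !mxE eqxx conjC1 mulr1 addr0 (inj_eq hi).
case: (i == j) => //.
have -> : maxn (h i) (h j) = f (maxn i j).
  rewrite /=; case: (ltngtP i j) => hij.
  - by rewrite (maxn_idPr (ltnW (fm _ _ hij (ltn_ord j)))).
  - by rewrite (maxn_idPl (ltnW (fm _ _ hij (ltn_ord i)))).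
  - by rewrite hij !maxnn.
have hm : (maxn i j < size bs)%N by rewrite gtn_max !ltn_ord.
by rewrite (proj2 (fn _ hm)).
Qed.

Lemma thr_interlace (bs bb : seq bool) : subseq bs bb ->
  (forall r, (r < size bs)%N -> nth 0 (thr_spec bb) r <= nth 0 (thr_spec bs) r) /\
  (forall j, (j < size bs)%N ->
     nth 0 (thr_spec bs) (size bs - 1 - j) <= nth 0 (thr_spec bb) (size bb - 1 - j)).
Proof.
move=> hsub; have [J [JU eJ]] := thr_embed hsub.
have Ah : thr_adj bb \is hermsymmx by apply: adj_herm; apply: thr_adj_herm.
have := interlace Ah JU; rewrite -eJ; exact.
Qed.

Local Close Scope sesquilinear_scope.
Unset Implicit Arguments.

Theorem theorem5p1 (k : nat) (s t : nat -> nat) (smin tmin smax tmax : nat) :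
  (0 < k)%N ->
  (forall i, (i < k)%N -> (1 <= s i)%N /\ (1 <= t i)%N) ->
  (exists2 i, (i < k)%N & s i = smin) -> (forall i, (i < k)%N -> (smin <= s i)%N) ->
  (exists2 i, (i < k)%N & t i = tmin) -> (forall i, (i < k)%N -> (tmin <= t i)%N) ->
  (exists2 i, (i < k)%N & s i = smax) -> (forall i, (i < k)%N -> (s i <= smax)%N) ->
  (exists2 i, (i < k)%N & t i = tmax) -> (forall i, (i < k)%N -> (t i <= tmax)%N) ->
  let b := block_string k s t in
  let b' := block_string k (fun _ => smin) (fun _ => tmin) in
  let b'' := block_string k (fun _ => smax) (fun _ => tmax) in
  let n := size b in
  let n' := (k * (smin + tmin))%N in
  let n'' := (k * (smax + tmax))%N in
  (forall i, (1 <= i <= k)%N ->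
     thr_lambda b'' i <= thr_lambda b i /\ thr_lambda b i <= thr_lambda b' i) /\
  (forall j, (j < k)%N ->
     thr_lambda b' (n' - j) <= thr_lambda b (n - j) /\
     thr_lambda b (n - j) <= thr_lambda b'' (n'' - j)).
Proof.
move=> k0 hst [i1 hi1 e1] hsmin [i2 hi2 e2] htmin _ hsmax _ htmax b b' b'' n n' n''.
have s1 : subseq b' b by apply: subseq_block => i hi; split; [exact: hsmin | exact: htmin].
have s2 : subseq b b'' by apply: subseq_block => i hi; split; [exact: hsmax | exact: htmax].
have sz1 : size b' = n' by apply: size_block_const.
have sz2 : size b'' = n'' by apply: size_block_const.
have le1 : (size b' <= n)%N by apply: size_subseq.
have smin1 : (1 <= smin)%N by rewrite -e1; case: (hst _ hi1).
have kn' : (k <= n')%N by rewrite /n'; nia.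
have [I1 I2] := thr_interlace s1.
have [I3 I4] := thr_interlace s2.
rewrite sz1 in I1 I2; rewrite sz2 in I4.
split.
- move=> i /andP [hi hik]; rewrite /thr_lambda; split.
  + apply: I3; lia.
  + apply: I1; lia.
- move=> j hj; rewrite /thr_lambda; split.
  + have -> : (n' - j).-1 = (n' - 1 - j)%N by lia.
    have -> : (n - j).-1 = (n - 1 - j)%N by lia.
    apply: I2; lia.
  + have -> : (n'' - j).-1 = (n'' - 1 - j)%N by lia.
    have -> : (n - j).-1 = (n - 1 - j)%N by lia.
    apply: I4; rewrite /n; lia.
Qed.
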